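(* Let $\lambda$ be a positive integer, $\psi_0\in\mathbb{R}$ and $G(\psi)=\cos(\lambda\psi+\psi_0)$. Then the function $$\left(p_r+\frac{p_\psi}{\lambda r}\frac{\partial}{\partial\psi}\right)^\lambda G(\psi)$$ (the operator in brackets applied $\lambda$ times to $G$) is a constant of motion of the geodesic Hamiltonian $H_g=\frac12\left(p_r^2+\frac{p_\psi^2}{r^2}\right)$.
   Context: Phase space coordinates are $(r,\psi,p_r,p_\psi)$ with $r>0$ (polar coordinates on the Euclidean plane) and canonical Poisson bracket; $p_r$, $p_\psi$, $1/(\lambda r)$ act by multiplication. A constant of motion is a function with vanishing Poisson bracket with the Hamiltonian. *)

(* Defs.v *)
From Stdlib Require Import Reals ClassicalEpsilon.
Open Scope R_scope.

(* Phase-space functions F r psi p_r p_psi  (polar coordinates, r > 0). *)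
Definition phase_fun := R -> R -> R -> R -> R.

(* Partial derivative with respect to psi: the derivative of
   t |-> F r t pr ppsi at psi (chosen by epsilon; for the smooth
   functions considered here it is the unique derivative). *)
Definition d_psi (F : phase_fun) : phase_fun :=
  fun r psi pr ppsi =>
    epsilon (inhabits 0)
      (fun l => derivable_pt_lim (fun t => F r t pr ppsi) psi l).

Definition Dop (lam : R) (F : phase_fun) : phase_fun :=
  fun r psi pr ppsi => pr * F r psi pr ppsi + ppsi / (lam * r) * d_psi F r psi pr ppsi.

Definition Hg : phase_fun :=
  fun r psi pr ppsi => / 2 * (pr ^ 2 + ppsi ^ 2 / r ^ 2).

Definition constant_of_motion (F H : phase_fun) : Prop :=
  forall r psi pr ppsi, 0 < r ->
    exists Fr Fpsi Fpr Fppsi Hr Hpsi Hpr Hppsi : R,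
      derivable_pt_lim (fun t => F t psi pr ppsi) r Fr /\
      derivable_pt_lim (fun t => F r t pr ppsi) psi Fpsi /\
      derivable_pt_lim (fun t => F r psi t ppsi) pr Fpr /\
      derivable_pt_lim (fun t => F r psi pr t) ppsi Fppsi /\
      derivable_pt_lim (fun t => H t psi pr ppsi) r Hr /\
      derivable_pt_lim (fun t => H r t pr ppsi) psi Hpsi /\
      derivable_pt_lim (fun t => H r psi t ppsi) pr Hpr /\
      derivable_pt_lim (fun t => H r psi pr t) ppsi Hppsi /\
      Fr * Hpr - Fpr * Hr + Fpsi * Hppsi - Fppsi * Hpsi = 0.

(* Main.v *)
Require Import Defs.
From Stdlib Require Import Reals ClassicalEpsilon FunctionalExtensionality Lra Lia.
Open Scope R_scope.

Lemma dpl_eq f x l l' : derivable_pt_lim f x l -> l = l' -> derivable_pt_lim f x l'.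
Proof. intros H ->; exact H. Qed.
Lemma dmult f g x lf lg : derivable_pt_lim f x lf -> derivable_pt_lim g x lg ->
  derivable_pt_lim (fun t => f t * g t) x (lf * g x + f x * lg).
Proof. intros; exact (derivable_pt_lim_mult f g x lf lg H H0). Qed.
Lemma dplus f g x lf lg : derivable_pt_lim f x lf -> derivable_pt_lim g x lg ->
  derivable_pt_lim (fun t => f t + g t) x (lf + lg).
Proof. intros; exact (derivable_pt_lim_plus f g x lf lg H H0). Qed.
Lemma dminus f g x lf lg : derivable_pt_lim f x lf -> derivable_pt_lim g x lg ->
  derivable_pt_lim (fun t => f t - g t) x (lf - lg).
Proof. intros; exact (derivable_pt_lim_minus f g x lf lg H H0). Qed.
Lemma dconst a x : derivable_pt_lim (fun _ => a) x 0.
Proof. exact (derivable_pt_lim_const a x). Qed.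
Lemma did x : derivable_pt_lim (fun t => t) x 1.
Proof. exact (derivable_pt_lim_id x). Qed.
Lemma dcomp f g x lf lg : derivable_pt_lim f x lf -> derivable_pt_lim g (f x) lg ->
  derivable_pt_lim (fun t => g (f t)) x (lg * lf).
Proof. intros; exact (derivable_pt_lim_comp f g x lf lg H H0). Qed.
Lemma dinvc a x : x <> 0 -> derivable_pt_lim (fun t => a / t) x (- a / x ^ 2).
Proof.
  intros Hx. eapply dpl_eq.
  - exact (derivable_pt_lim_div (fun _ => a) (fun t => t) x 0 1
      (derivable_pt_lim_const a x) (derivable_pt_lim_id x) Hx).
  - cbv beta; unfold Rsqr; field; auto.
Qed.
Lemma dcos_lin L c x : derivable_pt_lim (fun t => cos (L * t + c)) x (- sin (L*x+c) * L).
Proof.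
  apply (dcomp (fun t => L * t + c) cos).
  - eapply dpl_eq. apply dplus. apply dmult. apply dconst. apply did. apply dconst. cbv beta; ring.
  - apply derivable_pt_lim_cos.
Qed.
Lemma dsin_lin L c x : derivable_pt_lim (fun t => sin (L * t + c)) x (cos (L*x+c) * L).
Proof.
  apply (dcomp (fun t => L * t + c) sin).
  - eapply dpl_eq. apply dplus. apply dmult. apply dconst. apply did. apply dconst. cbv beta; ring.
  - apply derivable_pt_lim_sin.
Qed.

Fixpoint AB (k : nat) (p q : R) : R * R :=
  match k with
  | O => (1, 0)
  | S k => let (a, b) := AB k p q in (p * a - q * b, p * b + q * a)
  end.
Definition A k p q := fst (AB k p q).
Definition B k p q := snd (AB k p q).
Lemma A_S k p q : A (S k) p q = p * A k p q - q * B k p q.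
Proof. unfold A, B; simpl; destruct (AB k p q); reflexivity. Qed.
Lemma B_S k p q : B (S k) p q = p * B k p q + q * A k p q.
Proof. unfold A, B; simpl; destruct (AB k p q); reflexivity. Qed.
Lemma A_0 p q : A 0 p q = 1. Proof. reflexivity. Qed.
Lemma B_0 p q : B 0 p q = 0. Proof. reflexivity. Qed.

Lemma dAB_p k q p :
  derivable_pt_lim (fun t => A k t q) p (INR k * A (pred k) p q) /\
  derivable_pt_lim (fun t => B k t q) p (INR k * B (pred k) p q).
Proof.
  induction k as [|k [IA IB]].
  - split; (eapply dpl_eq; [unfold A, B; simpl; apply dconst | simpl; ring]).
  - assert (EA : (fun t => A (S k) t q) = fun t => t * A k t q - q * B k t q)
      by (apply functional_extensionality; intro; apply A_S).
    assert (EB : (fun t => B (S k) t q) = fun t => t * B k t q + q * A k t q)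
      by (apply functional_extensionality; intro; apply B_S).
    rewrite EA, EB. split; eapply dpl_eq.
    + apply dminus; apply dmult; (apply did || apply dconst || eassumption).
    + cbv beta. destruct k; simpl pred; [rewrite A_0, B_0; simpl; ring|].
      rewrite (A_S k). rewrite !S_INR. ring.
    + apply dplus; apply dmult; (apply did || apply dconst || eassumption).
    + cbv beta. destruct k; simpl pred; [rewrite A_0, B_0; simpl; ring|].
      rewrite (B_S k). rewrite !S_INR. ring.
Qed.

Lemma dAB_q k p q :
  derivable_pt_lim (fun t => A k p t) q (- INR k * B (pred k) p q) /\
  derivable_pt_lim (fun t => B k p t) q (INR k * A (pred k) p q).
Proof.
  induction k as [|k [IA IB]].
  - split; (eapply dpl_eq; [unfold A, B; simpl; apply dconst | simpl; ring]).
  - assert (EA : (fun t => A (S k) p t) = fun t => p * A k p t - t * B k p t)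
      by (apply functional_extensionality; intro; apply A_S).
    assert (EB : (fun t => B (S k) p t) = fun t => p * B k p t + t * A k p t)
      by (apply functional_extensionality; intro; apply B_S).
    rewrite EA, EB. split; eapply dpl_eq.
    + apply dminus; apply dmult; (apply did || apply dconst || eassumption).
    + cbv beta. destruct k; simpl pred; [rewrite A_0, B_0; simpl; ring|].
      rewrite (B_S k). rewrite !S_INR. ring.
    + apply dplus; apply dmult; (apply did || apply dconst || eassumption).
    + cbv beta. destruct k; simpl pred; [rewrite A_0, B_0; simpl; ring|].
      rewrite (A_S k). rewrite !S_INR. ring.
Qed.

Definition Fk (L psi0 : R) (k : nat) : phase_fun :=
  fun r psi pr ppsi =>
    A k pr (ppsi / r) * cos (L * psi + psi0) - B k pr (ppsi / r) * sin (L * psi + psi0).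

Lemma dF_psi L psi0 k r psi pr ppsi :
  derivable_pt_lim (fun t => Fk L psi0 k r t pr ppsi) psi
    (L * (- A k pr (ppsi / r) * sin (L * psi + psi0) - B k pr (ppsi / r) * cos (L * psi + psi0))).
Proof.
  unfold Fk. eapply dpl_eq.
  - apply dminus; apply dmult; (apply dconst || apply dcos_lin || apply dsin_lin).
  - cbv beta; ring.
Qed.

Lemma iter_eq L psi0 (HL : L <> 0) k :
  Nat.iter k (Dop L) (fun (r psi pr ppsi : R) => cos (L * psi + psi0)) = Fk L psi0 k.
Proof.
  induction k as [|k IH].
  - do 4 (apply functional_extensionality; intro). unfold Fk; rewrite A_0, B_0; simpl; ring.
  - simpl Nat.iter. rewrite IH.
    do 4 (apply functional_extensionality; intro).
    rename x into r, x0 into psi, x1 into pr, x2 into ppsi.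
    unfold Dop, d_psi.
    match goal with |- context [epsilon ?i ?P] =>
      assert (He : P (epsilon i P)) by (apply epsilon_spec; eexists; apply dF_psi);
      rewrite (uniqueness_limite _ _ _ _ He (dF_psi L psi0 k r psi pr ppsi)) end.
    assert (Hq : ppsi / (L * r) * L = ppsi / r).
    { unfold Rdiv. rewrite Rinv_mult.
      transitivity (ppsi * / r * (/ L * L)); [ring|]. rewrite Rinv_l; auto; ring. }
    rewrite <- Rmult_assoc, Hq. unfold Fk. rewrite A_S, B_S. ring.
Qed.

Theorem mainTheorem5 (lam : nat) (psi0 : R) (Hlam : (0 < lam)%nat) :
  constant_of_motion
    (Nat.iter lam (Dop (INR lam))
       (fun (r psi pr ppsi : R) => cos (INR lam * psi + psi0)))
    Hg.
Proof.
  assert (HL : INR lam <> 0) by (apply not_0_INR; lia).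
  rewrite iter_eq by exact HL.
  intros r psi pr ppsi Hr.
  assert (Hr0 : r <> 0) by lra.
  set (L := INR lam). set (c := cos (L * psi + psi0)). set (s := sin (L * psi + psi0)).
  set (q := ppsi / r).
  destruct (dAB_p lam q pr) as [DAp DBp].
  destruct (dAB_q lam pr q) as [DAq DBq].
  exists ((- L * B (pred lam) pr q * (- ppsi / r ^ 2)) * c - (L * A (pred lam) pr q * (- ppsi / r ^ 2)) * s).
  exists (L * (- A lam pr q * s - B lam pr q * c)).
  exists (L * A (pred lam) pr q * c - L * B (pred lam) pr q * s).
  exists ((- L * B (pred lam) pr q * / r) * c - (L * A (pred lam) pr q * / r) * s).
  exists (/2 * (0 + (- ppsi ^ 2 / r ^ 2) * (2 / r))).
  exists 0. exists pr. exists (ppsi / r ^ 2).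
  split; [|split; [|split; [|split; [|split; [|split; [|split; [|split]]]]]]].
  - unfold Fk. fold c s. eapply dpl_eq.
    + apply dminus; apply dmult; try apply dconst.
      * apply (dcomp (fun t => ppsi / t) (fun t => A lam pr t)). apply dinvc; auto. exact DAq.
      * apply (dcomp (fun t => ppsi / t) (fun t => B lam pr t)). apply dinvc; auto. exact DBq.
    + cbv beta; unfold L. fold q. ring.
  - apply dF_psi.
  - unfold Fk. fold c s q. eapply dpl_eq.
    + apply dminus; apply dmult; try apply dconst; eassumption.
    + cbv beta; unfold L. ring.
  - unfold Fk. fold c s. eapply dpl_eq.
    + apply dminus; apply dmult; try apply dconst.
      * apply (dcomp (fun t => t / r) (fun t => A lam pr t) ppsi (/ r)).
        { eapply dpl_eq. apply (dmult (fun t => t) (fun _ => / r)). apply did. apply dconst. cbv beta; ring. }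
        exact DAq.
      * apply (dcomp (fun t => t / r) (fun t => B lam pr t) ppsi (/ r)).
        { eapply dpl_eq. apply (dmult (fun t => t) (fun _ => / r)). apply did. apply dconst. cbv beta; ring. }
        exact DBq.
    + cbv beta; unfold L. fold q. ring.
  - unfold Hg. eapply dpl_eq.
    + apply (dmult (fun _ => /2)). apply dconst. apply dplus. apply dconst.
      apply (dcomp (fun t => t ^ 2) (fun u => ppsi ^ 2 / u)).
      apply derivable_pt_lim_pow. apply dinvc. apply pow_nonzero; auto.
    + simpl; unfold L. field; auto.
  - unfold Hg. apply dconst.
  - unfold Hg. eapply dpl_eq.
    + apply (dmult (fun _ => /2)). apply dconst. apply dplus.
      apply derivable_pt_lim_pow. apply dconst.
    + simpl; unfold L. field; auto.
  - unfold Hg. eapply dpl_eq.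
    + apply (dmult (fun _ => /2)). apply dconst. apply dplus. apply dconst.
      apply (dmult (fun t => t ^ 2) (fun _ => / r ^ 2)).
      apply derivable_pt_lim_pow. apply dconst.
    + simpl; unfold L. field; auto.
  - destruct lam as [|m]; [lia|]. simpl pred.
    rewrite A_S, B_S. unfold q. fold L. unfold L. rewrite S_INR. field; auto.
Qed.
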